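(* Let $X$ be a real Banach space and $T:X\rightrightarrows X^*$ maximal monotone. The following are equivalent: 1. $R(T)$ is bounded; 2. for every $h\in\mathcal{F}_T$, $P_2(D(h))$ is bounded; 3. there exists $h\in\mathcal{F}_T$ with $P_2(D(h))$ bounded; 4. the functions $h(\cdot,x^* ):X\to\mathbb{R}\cup\{\pm\infty\}$, for $h\in\mathcal{F}_T$ and $x^*\in P_2D(h)$, are all real-valued and there is $0\leq L<\infty$ with $|h(x,x^* )-h(z,x^* )|\leq L\|x-z\|$ for all $x,z\in X$, $h\in\mathcal{F}_T$, $x^*\in P_2D(h)$; 5. there exists $h\in\mathcal{F}_T$ such that the functions $h(\cdot,x^* )$, $x^*\in P_2D(h)$, are all real-valued and there is $0\leq L<\infty$ with $|h(x,x^* )-h(z,x^* )|\leq L\|x-z\|$ for all $x,z\in X$, $x^*\in P_2D(h)$.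
   Context: An operator $T:X\rightrightarrows X^*$ is a subset of $X\times X^*$, with range $R(T)$ its projection onto $X^*$; $T$ is monotone if $\langle x-y,x^*-y^*\rangle\geq0$ for all $(x,x^* ),(y,y^* )\in T$, and maximal monotone if it is monotone and not properly contained in another monotone operator. $\mathcal{F}_T$ is the set of all convex lower semicontinuous $h:X\times X^*\to\mathbb{R}\cup\{\pm\infty\}$ with $h(x,x^* )\geq\langle x,x^*\rangle$ for all $(x,x^* )$ and equality on $T$. $P_1,P_2$ are the canonical projections of $X\times X^*$ onto $X$ and $X^*$; $D(h)=\{z\;|\;h(z)<\infty\}$. *)

(* Defs.v *)
From HB Require Import structures.
From mathcomp Require Import all_boot all_order all_algebra.
From mathcomp Require Import all_classical all_reals all_analysis.
Set Implicit Arguments. Unset Strict Implicit. Unset Printing Implicit Defensive.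
Import Order.TTheory GRing.Theory Num.Theory.
Import numFieldNormedType.Exports.
Local Open Scope classical_set_scope.
Local Open Scope ring_scope.

Definition is_dual (R : realType) (X : normedModType R) (f : X -> R) : Prop :=
  (forall x y : X, f (x + y) = f x + f y) /\
  (forall (a : R) (x : X), f (a *: x) = a * f x) /\
  continuous f.

Definition is_operator (R : realType) (X : normedModType R)
  (T : set (X * (X -> R))) : Prop :=
  forall z, T z -> is_dual z.2.

Definition monotone_op (R : realType) (X : normedModType R)
  (T : set (X * (X -> R))) : Prop :=
  is_operator T /\
  forall x f y g, T (x, f) -> T (y, g) -> 0 <= f (x - y) - g (x - y).

Definition maximal_monotone (R : realType) (X : normedModType R)
  (T : set (X * (X -> R))) : Prop :=
  monotone_op T /\
  forall T' : set (X * (X -> R)), monotone_op T' -> T `<=` T' -> T' = T.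

Definition range_bounded (R : realType) (X : normedModType R)
  (T : set (X * (X -> R))) : Prop :=
  exists M : R, forall x f, T (x, f) -> forall u : X, `|f u| <= M * `|u|.

(* Functions h : X × X^* -> R ∪ {±∞}; only values at dual f matter. *)
Definition ext_convex (R : realType) (X : normedModType R)
  (h : X * (X -> R) -> \bar R) : Prop :=
  forall x1 f1 x2 f2 (l r1 r2 : R), is_dual f1 -> is_dual f2 ->
    0 <= l -> l <= 1 ->
    (h (x1, f1) <= r1%:E)%E -> (h (x2, f2) <= r2%:E)%E ->
    (h ((l *: x1 + (1 - l) *: x2)%R, fun u => (l * f1 u + (1 - l) * f2 u)%R)
       <= (l * r1 + (1 - l) * r2)%:E)%E.

(* Lower semicontinuity w.r.t. the norm topology of X × X^*
   (the dual norm ball of radius d around f is {g | |g u - f u| <= d |u|}). *)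
Definition ext_lsc (R : realType) (X : normedModType R)
  (h : X * (X -> R) -> \bar R) : Prop :=
  forall x f, is_dual f -> forall t : R, (t%:E < h (x, f))%E ->
    exists2 d : R, 0 < d &
      forall y g, is_dual g -> `|y - x| < d ->
        (forall u : X, `|g u - f u| <= d * `|u|) -> (t%:E < h (y, g))%E.

Definition fitzpatrick_family (R : realType) (X : normedModType R)
  (T : set (X * (X -> R))) (h : X * (X -> R) -> \bar R) : Prop :=
  ext_convex h /\ ext_lsc h /\
  (forall x f, is_dual f -> ((f x)%:E <= h (x, f))%E) /\
  (forall x f, T (x, f) -> h (x, f) = (f x)%:E).

Definition P2D (R : realType) (X : normedModType R)
  (h : X * (X -> R) -> \bar R) (f : X -> R) : Prop :=
  is_dual f /\ exists x : X, (h (x, f) < +oo)%E.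

Definition P2D_bounded (R : realType) (X : normedModType R)
  (h : X * (X -> R) -> \bar R) : Prop :=
  exists M : R, forall f, P2D h f -> forall u : X, `|f u| <= M * `|u|.

(* Main.v *)
Require Import Defs.
From HB Require Import structures.
From mathcomp Require Import all_boot all_order all_algebra.
From mathcomp Require Import all_classical all_reals all_analysis.
Import Order.TTheory GRing.Theory Num.Theory.
Import numFieldNormedType.Exports.
Local Open Scope classical_set_scope.
Local Open Scope ring_scope.

From Stdlib Require List.
From mathcomp Require Import lra ring.

Section Ville.
Variables (R : realType) (V : lmodType R) (col : V -> nat -> R).
Hypothesis col_lin : forall (c : R) x y j, col (c *: x + y) j = c * col x j + col y j.

Lemma col0 j : col 0 j = 0.
Proof.
have := col_lin 1 0 0 j; rewrite scale1r addr0 mul1r => h; lra.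
Qed.

Lemma colZ c x j : col (c *: x) j = c * col x j.
Proof. by have := col_lin c x 0 j; rewrite addr0 col0 addr0. Qed.

Inductive pc (rs : seq V) : V -> R -> Prop :=
| pc0 : pc rs 0 0
| pcS r c v w : List.In r rs -> 0 <= c -> pc rs v w -> pc rs (c *: r + v) (c + w).

Lemma pc_ge0 rs v w : pc rs v w -> 0 <= w.
Proof. by elim=> // r c v' w' _ c0 _ w0; apply: addr_ge0. Qed.

Lemma pc_add rs v1 w1 v2 w2 : pc rs v1 w1 -> pc rs v2 w2 -> pc rs (v1 + v2) (w1 + w2).
Proof.
move=> h1 h2; elim: h1 => [|r c v w Hr c0 _ IH]; first by rewrite !add0r.
by rewrite -!addrA; apply: pcS.
Qed.

Lemma pc_scale rs a v w : 0 <= a -> pc rs v w -> pc rs (a *: v) (a * w).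
Proof.
move=> a0; elim=> [|r c v' w' Hr c0 _ IH]; first by rewrite scaler0 mulr0; apply: pc0.
rewrite scalerDr scalerA mulrDr; apply: pcS => //; exact: mulr_ge0.
Qed.

Lemma pc_trans rs rs' v w :
  (forall s, List.In s rs' -> exists2 ws, 0 < ws & pc rs s ws) ->
  pc rs' v w -> exists w', [/\ pc rs v w', 0 <= w' & (0 < w -> 0 < w')].
Proof.
move=> Hs; elim=> [|r c v' w' Hr c0 _ [w'' [IH1 IH2 IH3]]].
  by exists 0; split; [exact: pc0 | exact: lexx | rewrite ltxx].
have [ws ws0 Hws] := Hs r Hr.
exists (c * ws + w''); split.
- by apply: pc_add => //; apply: pc_scale.
- by apply: addr_ge0 => //; apply: mulr_ge0 => //; apply: ltW.
- move=> cw0; have [c_gt0|] := ltP 0 c.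
    by apply: ltr_pwDl => //; apply: mulr_gt0.
  rewrite le_eqVlt => /orP [/eqP c_eq0|]; last by rewrite ltNge c0.
  by move: cw0; rewrite c_eq0 add0r mul0r add0r => /IH3.
Qed.

Lemma pc_col rs n v w : (forall r, List.In r rs -> 0 <= col r n) -> pc rs v w -> 0 <= col v n.
Proof.
move=> H; elim=> [|r c v' w' Hr c0 _ IH]; first by rewrite col0.
by rewrite col_lin; apply: addr_ge0 => //; apply: mulr_ge0 => //; apply: H.
Qed.

Section Folds.
Variable (F : V -> R).
Definition fmax l := foldr (fun x acc => Num.max (F x) acc) 0 l.
Lemma fmax_ge0 l : 0 <= fmax l.
Proof. by elim: l => [|x l IH] //=; rewrite le_max IH orbT. Qed.
Lemma fmax_ge l s : List.In s l -> F s <= fmax l.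
Proof.
elim: l => [|x l IH] //= [->|/IH h]; first by rewrite le_max lexx.
by rewrite le_max h orbT.
Qed.
Lemma fmax_lt l b : 0 < b -> (forall s, List.In s l -> F s < b) -> fmax l < b.
Proof.
move=> b0; elim: l => [|x l IH] //= H.
by rewrite gt_max H /=; [apply: IH => s hs; apply: H; right | left].
Qed.
Variable (P : V -> bool).
Definition fmin a l := foldr (fun x acc => if P x then Num.min (F x) acc else acc) a l.
Lemma fmin_le a l r : List.In r l -> P r -> fmin a l <= F r.
Proof.
elim: l => [|x l IH] //= [->|/IH h] Pr; first by rewrite Pr ge_min lexx.
by case: (P x); rewrite ?ge_min h ?orbT // Pr.
Qed.
Lemma fmin_gt a l b : b < a -> (forall r, List.In r l -> P r -> b < F r) -> b < fmin a l.
Proof.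
move=> ba; elim: l => [|x l IH] //= H.
have IH' : b < fmin a l by apply: IH => r hr; apply: H; right.
case Px: (P x) => //; rewrite lt_min IH' andbT; exact: H (or_introl _) Px.
Qed.
End Folds.

Lemma ville n : forall rs : seq V,
  (exists v w, [/\ pc rs v w, 0 < w & forall j, (j < n)%N -> 0 <= col v j])
  \/ (exists mu : nat -> R, (forall j, 0 <= mu j) /\
        forall r, List.In r rs -> \sum_(j < n) col r j * mu j < 0).
Proof.
elim: n => [|n IH] rs.
  case: rs => [|r rs].
    by right; exists (fun _ => 0); split.
  left; exists r, 1; split => //.
  have := @pcS (r :: rs) r 1 0 0 (or_introl erefl) ler01 (pc0 _).
  by rewrite scale1r !addr0.
set pos := List.filter (fun r => 0 <= col r n) rs.
set neg := List.filter (fun r => col r n < 0) rs.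
set comb := fun r s => (- col s n) *: r + col r n *: s.
set rs' := List.app pos (List.flat_map (fun r => List.map (comb r) neg) pos).
have inrs' : forall s, List.In s rs' ->
   (List.In s pos) \/ (exists r s0, [/\ List.In r pos, List.In s0 neg & s = comb r s0]).
  move=> s /List.in_app_iff [h|/List.in_flat_map [r [hr /List.in_map_iff [s0 [<- hs0]]]]].
    by left.
  by right; exists r, s0.
have inpos r : List.In r pos <-> List.In r rs /\ 0 <= col r n.
  by rewrite /pos List.filter_In.
have inneg r : List.In r neg <-> List.In r rs /\ col r n < 0.
  by rewrite /neg List.filter_In.
have colcomb r s : col (comb r s) n = 0.
  by rewrite /comb col_lin colZ mulNr mulrC addNr.
case: (IH rs') => [[v [w [pcv w0 vj]]] | [mu [mu0 Hmu]]].
  left.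
  have [|w' [pcv' w'0 Hw']] := @pc_trans rs rs' v w _ pcv.
    move=> s /inrs' [/inpos [hs _]|[r [s0 [/inpos [hr cr] /inneg [hs0 cs0] ->]]]].
      exists 1; first exact: ltr01.
      have := @pcS rs s 1 0 0 hs ler01 (pc0 _); by rewrite scale1r !addr0.
    exists (- col s0 n + (col r n + 0)).
      by rewrite addr0; apply: ltr_pwDl => //; rewrite oppr_gt0.
    apply: pcS => //; first by rewrite oppr_ge0 ltW.
    have := @pcS rs s0 (col r n) 0 0 hs0 cr (pc0 _); by rewrite addr0.
  exists v, w'; split => //; first exact: Hw'.
  move=> j; rewrite ltnS leq_eqVlt => /orP [/eqP ->|/vj //].
  apply: (@pc_col rs' n v w _ pcv) => s /inrs' [/inpos [_ //]|[r [s0 [_ _ ->]]]].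
  by rewrite colcomb.
right.
set S := fun r => \sum_(j < n) col r j * mu j.
have SL c x y : S (c *: x + y) = c * S x + S y.
  rewrite /S mulr_sumr -big_split /=; apply: eq_bigr => j _.
  by rewrite col_lin mulrDl mulrA.
have S0 : S 0 = 0 by rewrite /S big1 // => j _; rewrite col0 mul0r.
have SZ c x : S (c *: x) = c * S x by rewrite -[c *: x]addr0 SL S0 addr0.
have Spos r : List.In r pos -> S r < 0.
  by move=> h; apply: Hmu; apply/List.in_app_iff; left.
have Scomb r s : List.In r pos -> List.In s neg -> S (comb r s) < 0.
  move=> hr hs; apply: Hmu; apply/List.in_app_iff; right.
  by apply/List.in_flat_map; exists r; split => //; apply: List.in_map.
set F := fun s => S s / (- col s n).
set G := fun r => - S r / col r n.
set A := fmax F neg.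
set B := fmin G (fun r => 0 < col r n) (A + 1) pos.
have A0 : 0 <= A by apply: fmax_ge0.
have FG r s : List.In r pos -> List.In s neg -> 0 < col r n -> F s < G r.
  move=> hr hs cr; have [_ cs] := (inneg s).1 hs.
  have := Scomb r s hr hs; rewrite /comb SL SZ /F /G => h.
  rewrite ltr_pdivrMr ?oppr_gt0 // mulrAC ltr_pdivlMr //.
  nra.
have AB : A < B.
  apply: fmin_gt; first by rewrite ltrDl ltr01.
  move=> r hr /= cr; apply: fmax_lt.
    by rewrite /G divr_gt0 // oppr_gt0; apply: Spos.
  by move=> s hs; apply: FG.
set t := (A + B) / 2.
have At : A < t by rewrite /t; lra.
have tB : t < B by rewrite /t; lra.
exists (fun j => if (j < n)%N then mu j else t); split.
  by move=> j; case: ifP => _ //; lra.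
move=> r hr; rewrite big_ord_recr /= ltnn.
have -> : \sum_(i < n) col r (widen_ord (leqnSn n) i) *
      (if (widen_ord (leqnSn n) i < n)%N then mu (widen_ord (leqnSn n) i) else t) = S r.
  by apply: eq_bigr => i _ /=; rewrite ltn_ord.
have [cr|cr] := leP 0 (col r n).
  have hp : List.In r pos by apply/inpos.
  have Sr := Spos r hp.
  move: cr; rewrite le_eqVlt => /orP [/eqP <-|cr]; first by rewrite mul0r addr0.
  have := @fmin_le G (fun r => 0 < col r n) (A + 1) pos r hp cr; rewrite -/B /G => hB.
  have : t < - S r / col r n by apply: lt_le_trans hB.
  rewrite ltr_pdivlMr // => h; nra.
have hn : List.In r neg by apply/inneg.
have := @fmax_ge F neg r hn; rewrite -/A /F => hA.
have : S r / - col r n < t by apply: le_lt_trans At.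
rewrite ltr_pdivrMr ?oppr_gt0 // => h; nra.
Qed.
End Ville.

Section Duals.
Variables (R : realType) (X : normedModType R).

Lemma dualD {f : X -> R} (df : is_dual f) x y : f (x + y) = f x + f y.
Proof. by case: df. Qed.
Lemma dualZ {f : X -> R} (df : is_dual f) a x : f (a *: x) = a * f x.
Proof. by case: df => _ []. Qed.
Lemma dual0 {f : X -> R} (df : is_dual f) : f 0 = 0.
Proof. by have := dualZ df 0 0; rewrite scale0r mul0r. Qed.
Lemma dualN {f : X -> R} (df : is_dual f) x : f (- x) = - f x.
Proof. by rewrite -scaleN1r (dualZ df) mulN1r. Qed.
Lemma dualB {f : X -> R} (df : is_dual f) x y : f (x - y) = f x - f y.
Proof. by rewrite (dualD df) (dualN df). Qed.
End Duals.
Arguments dualD {R X f}. Arguments dualZ {R X f}. Arguments dual0 {R X f}. Arguments dualN {R X f}. Arguments dualB {R X f}.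

Section DFfin.
Variables (R : realType) (X : normedModType R) (T : set (X * (X -> R))).
Hypothesis HT : monotone_op T.
Variable x0 : X.

Let V := ((nat -> R) * (X -> R))%type.
Let col (v : V) j := v.1 j.
Let col_lin : forall (c : R) (x y : V) j, col (c *: x + y) j = c * col x j + col y j.
Proof. by []. Qed.

Let scRE (c y : R) : c *: y = c * y.
Proof. by []. Qed.

Lemma df_finite (M : R) (M0 : 0 <= M)
  (HM : forall x f, T (x, f) -> forall u, `|f u| <= M * `|u|) (ps : seq (X * (X -> R))) :
  (forall p, List.In p ps -> T p) ->
  exists phi : X -> R, [/\ forall u v, phi (u + v) = phi u + phi v,
     forall a u, phi (a *: u) = a * phi u,
     forall u, `|phi u| <= M * `|u| &
     forall p, List.In p ps -> 0 <= phi (x0 - p.1) - p.2 (x0 - p.1)].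
Proof.
move=> Hps; case: ps Hps => [|p0 ps'] Hps.
  exists (fun _ => 0); split => //; first by move=> *; rewrite addr0.
  - by move=> *; rewrite mulr0.
  - by move=> u; rewrite normr0; apply: mulr_ge0.
set ps := p0 :: ps'.
have Teta (p : X * (X -> R)) : T p -> T (p.1, p.2) by case: p.
set n := length ps.
set q := fun j => List.nth j ps p0.
have Tq j : (j < n)%N -> T (q j) by move=> /ssrnat.ltP h; apply: Hps; apply: List.nth_In.
have dq j : (j < n)%N -> is_dual (q j).2 by move=> /Tq h; apply: HT.1 h.
set row := fun p : X * (X -> R) =>
  ((fun j => p.2 (x0 - (q j).1) - (q j).2 (x0 - (q j).1)), p.2) : V.
set rs := List.map row ps.
have Inv v w : @pc _ _ rs v w -> [/\ forall j, v.1 j = v.2 (x0 - (q j).1) - w * (q j).2 (x0 - (q j).1),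
    forall u u', v.2 (u + u') = v.2 u + v.2 u', forall a u, v.2 (a *: u) = a * v.2 u
    & forall u, `|v.2 u| <= w * M * `|u|].
  elim=> [|r c v' w' /List.in_map_iff [p [<- hp]] c0 _ [I1 I2 I3 I4]].
    split => //=; first by move=> j; rewrite mul0r subr0.
    - by move=> *; rewrite addr0.
    - by move=> *; rewrite mulr0.
    - by move=> u; rewrite normr0 mul0r mul0r.
  have Tp := Hps p hp; have dp : is_dual p.2 := HT.1 _ Tp.
  split => /=.
  - move=> j; rewrite /= !fctE I1 /= !scRE; lra.
  - move=> u u'; rewrite !fctE I2 (dualD dp) !scRE; lra.
  - move=> a u; rewrite !fctE I3 (dualZ dp) !scRE; lra.
  - move=> u; apply: (le_trans (ler_normD _ _)).
    rewrite normrM ger0_norm // !mulrDl -!mulrA; apply: lerD => //.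
    by apply: ler_wpM2l => //; have := HM _ _ (Teta _ Tp) u.
    by rewrite mulrA.
have [[v [w [pcv w0 vj]]]|[mu [mu0 Hmu]]] := @ville _ _ col col_lin n rs.
  have [I1 I2 I3 I4] := Inv v w pcv.
  exists (fun u => w^-1 * v.2 u); split.
  - by move=> u u'; rewrite I2 mulrDr.
  - by move=> a u; rewrite I3 mulrCA.
  - move=> u; rewrite normrM ger0_norm; last by rewrite invr_ge0 ltW.
    rewrite mulrC ler_pdivrMr //.
    by have -> : M * `|u| * w = w * M * `|u| by ring.
  - move=> p hp; have [j [/ssrnat.ltP jn <-]] := List.In_nth _ _ p0 hp.
    have := vj j jn; rewrite /col I1 -/(q j).
    set a := v.2 _; set b := (q j).2 _ => h.
    have -> : w^-1 * a - b = w^-1 * (a - w * b) by rewrite mulrBr mulrA mulVf ?gt_eqF // mul1r.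
    by apply: mulr_ge0 => //; rewrite invr_ge0 ltW.
exfalso.
set c := fun i j => (q i).2 (x0 - (q j).1) - (q j).2 (x0 - (q j).1).
set s := fun i => \sum_(j < n) c i j * mu j.
have s_lt0 i : (i < n)%N -> s i < 0.
  move=> /ssrnat.ltP h; apply: (Hmu (row (q i))); apply: List.in_map; exact: List.nth_In.
set Q := \sum_(i < n) mu i * s i.
have cc i j : (i < n)%N -> (j < n)%N -> 0 <= c i j + c j i.
  move=> hi hj; have := HT.2 _ _ _ _ (Teta _ (Tq i hi)) (Teta _ (Tq j hj)).
  rewrite /c !(dualB (dq i hi)) !(dualB (dq j hj)); lra.
have Q0 : 0 <= Q.
  have e : Q = \sum_(i < n) \sum_(j < n) mu i * mu j * c i j.
    by rewrite /Q; apply: eq_bigr => i _; rewrite /s mulr_sumr; apply: eq_bigr => j _; ring.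
  have e2 : Q = \sum_(i < n) \sum_(j < n) mu i * mu j * c j i.
    rewrite e exchange_big /=; apply: eq_bigr => i _; apply: eq_bigr => j _.
    by rewrite [mu j * _]mulrC.
  have : 0 <= Q + Q.
    rewrite {1}e e2 -big_split /=; apply: sumr_ge0 => i _.
    rewrite -big_split /=; apply: sumr_ge0 => j _.
    by rewrite -mulrDr; apply: mulr_ge0; [apply: mulr_ge0|apply: cc].
  lra.
have Qle : - Q = \sum_(i < n) (- (mu i * s i)) by rewrite sumrN.
have nn : forall i : 'I_n, true -> 0 <= - (mu i * s i).
  by move=> i _; rewrite oppr_ge0 mulr_ge0_le0 // ltW // s_lt0.
have hz : \sum_(i < n) (- (mu i * s i)) = 0.
  apply/eqP; rewrite eq_le; apply/andP; split; last first.
    by apply: sumr_ge0.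
  by rewrite -Qle oppr_le0.
have mu_0 i : (i < n)%N -> mu i = 0.
  move=> hi; have := @psumr_eq0P _ _ _ _ nn hz (Ordinal hi) isT.
  move=> /eqP; rewrite oppr_eq0 mulf_eq0 => /orP [/eqP //|/eqP si].
  by have := s_lt0 i hi; rewrite si ltxx.
have : s 0%N = 0 by rewrite /s big1 // => j _; rewrite mu_0 // mulr0.
by have := s_lt0 0%N isT => /[swap] ->; rewrite ltxx.
Qed.
End DFfin.

HB.instance Definition _ (R : realType) (X : Type) :=
  isPointed.Build (prod_topology (fun _ : X => R)) (fun _ => 0).

Lemma bound_cont (R : realType) (X : normedModType R) (phi : X -> R) (M : R) :
  (forall u v, phi (u - v) = phi u - phi v) -> (forall u, `|phi u| <= M * `|u|) -> continuous phi.
Proof.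
move=> hB hM x; apply/cvgrPdist_lt => e e0.
have M1 : 0 < `|M| + 1 by rewrite ltr_wpDl.
near=> y.
have hy : `|x - y| < e / (`|M| + 1).
  near: y; exact: (@cvgr_dist_lt _ _ _ (nbhs x) _ id x cvg_id _ (divr_gt0 e0 M1)).
rewrite -hB; apply: (le_lt_trans (hM _)).
apply: (le_lt_trans (ler_wpM2r (normr_ge0 _) (ler_norm M))).
apply: (le_lt_trans (ler_wpM2l (normr_ge0 _) (ltW hy))).
rewrite mulrA ltr_pdivrMr // mulrDr mulr1 mulrC ltrDl.
Unshelve. all: by end_near. Qed.

Lemma cont_sub (Y : topologicalType) (R : realType) (F G : Y -> R) :
  continuous F -> continuous G -> continuous (fun z => F z - G z).
Proof. move=> cF cG z; exact: (continuousB (cF z) (cG z)). Qed.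
Lemma cont_mul (Y : topologicalType) (R : realType) (F G : Y -> R) :
  continuous F -> continuous G -> continuous (fun z => F z * G z).
Proof. move=> cF cG z; exact: (continuousM (cF z) (cG z)). Qed.

Lemma In_mem {U : eqType} {x : U} {s : seq U} : List.In x s -> x \in s.
Proof.
elim: s => //= y s IH [->|/IH h]; first by rewrite in_cons eqxx.
by rewrite in_cons h orbT.
Qed.

Section DFinf.
Variables (R : realType) (X : normedModType R) (T : set (X * (X -> R))).
Hypothesis HT : monotone_op T.
Variables (M : R) (M0 : 0 <= M).
Hypothesis HM : forall x f, T (x, f) -> forall u, `|f u| <= M * `|u|.
Variable x0 : X.

Local Notation PT := {ptws X -> R}.
Local Notation I := ((X * (X -> R)) + ((X * X) + (R * X)))%type.

Let K (u : X) : set R := `[- (M * `|u|), M * `|u|]%classic.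
Let A := [set phi : PT | forall u, K u (phi u)].
Let cA : compact A.
Proof. exact: (@tychonoff X (fun _ => R) K (fun u => @segment_compact R (- (M * `|u|)) (M * `|u|))). Qed.

Let proj_cont (u : X) : continuous (fun phi : PT => phi u).
Proof. exact: (@proj_continuous X (fun _ => R) u). Qed.

Let KE (u : X) (y : R) : K u y <-> `|y| <= M * `|u|.
Proof. by rewrite /K /= in_itv /= ler_norml. Qed.

Let D : set I := fun i => match i with inl p => T p | inr _ => True end.
Let g (i : I) : set PT := match i with
 | inl p => [set phi : PT | 0 <= phi (x0 - p.1) - p.2 (x0 - p.1)]
 | inr (inl uv) => [set phi : PT | phi (uv.1 + uv.2) - phi uv.1 - phi uv.2 = 0]
 | inr (inr au) => [set phi : PT | phi (au.1 *: au.2) - au.1 * phi au.2 = 0]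
 end.
Let f i := A `&` g i.

Let closed_g i : closed (g i).
Proof.
case: i => [p|[[u v]|[a u]]] /=.
- have cF : continuous (fun phi : PT => phi (x0 - p.1) - p.2 (x0 - p.1)).
    by apply: cont_sub; [apply: proj_cont|apply: cst_continuous].
  exact (@preimage_closed _ _ _ [set y : R | 0 <= y] (fun z _ => cF z) (@closed_ge R 0)).
- have cF : continuous (fun phi : PT => phi (u + v) - phi u - phi v).
    by apply: cont_sub; [apply: cont_sub|]; apply: proj_cont.
  exact (@preimage_closed _ _ _ [set y : R | y = 0] (fun z _ => cF z) (@closed_eq R 0)).
- have cF : continuous (fun phi : PT => phi (a *: u) - a * phi u).
    apply: cont_sub; first by apply: proj_cont.
    by apply: cont_mul; [apply: cst_continuous|apply: proj_cont].
  exact (@preimage_closed _ _ _ [set y : R | y = 0] (fun z _ => cF z) (@closed_eq R 0)).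
Qed.

Let selp (i : I) := if i is inl p then Some p else None.

Let In_pmap (s : seq I) p : List.In p (pmap selp s) -> List.In (inl p) s.
Proof.
elim: s => //= i s IH; case: i => [q|q] /=; last by move/IH; right.
by case=> [->|/IH]; [left|right].
Qed.

Let mem_pmap' (s : seq I) p : inl p \in s -> List.In p (pmap selp s).
Proof.
elim: s => //= i s IH; rewrite in_cons => /orP [/eqP <-|/IH h] /=; first by left.
by case: i => [q|q] /=; [right|].
Qed.

Lemma df_inf : exists phi : X -> R,
  [/\ is_dual phi, forall u, `|phi u| <= M * `|u| &
      forall a h, T (a, h) -> 0 <= phi (x0 - a) - h (x0 - a)].
Proof.
have := cA; rewrite compact_In0 => /(_ _ D f) [].
- by exists g => // i _.
- move=> D' sD'.
  set ps := pmap selp (finmap.enum_fset D').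
  have [phi [p1 p2 p3 p4]] := @df_finite _ _ _ HT x0 M M0 HM ps
    (fun p hp => set_mem (sD' _ (In_mem (In_pmap _ _ hp)))).
  exists phi => i /= hi; split.
    by move=> u; apply/KE.
  case: i hi => [p|[[u v]|[a u]]] hi /=.
  + by apply: p4; apply: mem_pmap'; exact: hi.
  + by rewrite p1; ring.
  + by rewrite p2; ring.
- move=> phi Hphi.
  have Aphi : A phi by have [] := Hphi (inr (inl (0, 0))) Logic.I.
  have hD u v : phi (u + v) = phi u + phi v.
    have [_ /= /eqP] := Hphi (inr (inl (u, v))) Logic.I.
    by rewrite subr_eq0 subr_eq => /eqP ->; ring.
  have hZ a u : phi (a *: u) = a * phi u.
    have [_ /= /eqP] := Hphi (inr (inr (a, u))) Logic.I.
    by rewrite subr_eq0 => /eqP.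
  have hB u v : phi (u - v) = phi u - phi v.
    by rewrite hD -scaleN1r hZ; ring.
  have hM u : `|phi u| <= M * `|u| by apply/KE; apply: Aphi.
  exists phi; split => //.
  + by split; [|split; [|exact: (@bound_cont R X phi M hB hM)]].
  + by move=> a h Th; have [_ /=] := Hphi (inl (a, h)) Th.
Qed.
End DFinf.

Lemma cont_add (Y : topologicalType) (R : realType) (F G : Y -> R) :
  continuous F -> continuous G -> continuous (fun z => F z + G z).
Proof. move=> cF cG z; exact: (continuousD (cF z) (cG z)). Qed.

Section Fitz.
Variables (R : realType) (X : normedModType R).

Let scRE (c y : R) : c *: y = (c * y)%R.
Proof. by []. Qed.

Lemma dual_bounded (f : X -> R) : is_dual f ->
  exists2 B : R, (0 < B)%R & forall u, (`|f u| <= B * `|u|)%R.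
Proof.
move=> df; have [_ [_ cf]] := df.
have := cf 0; move/cvgrPdist_lt => /(_ 1%R ltr01).
rewrite (dual0 df) => /nbhs_ballP [e e0 He].
exists (2 / e)%R; first by rewrite divr_gt0.
move=> u; have [->|u0] := eqVneq u 0.
  by rewrite (dual0 df) !normr0 mulr0.
have nu : (0 < `|u|)%R by rewrite normr_gt0.
set k := (e / (2 * `|u|))%R.
have k0 : (0 < k)%R by rewrite divr_gt0 // mulr_gt0.
have hv : ball (0 : X) e (k *: u).
  rewrite -ball_normE /ball_ /= sub0r normrN normrZ gtr0_norm //.
  have -> : (k * `|u| = e / 2)%R.
    by rewrite /k; field; rewrite gt_eqF.
  by rewrite ltr_pdivrMr // ltr_pMr // ltr1n.
have := He _ hv; rewrite /= sub0r normrN (dualZ df) normrM gtr0_norm // => h.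
have : (e * `|f u| < 2 * `|u|)%R.
  by move: h; rewrite /k mulrAC ltr_pdivrMr ?mulr_gt0 // mul1r.
rewrite mulrAC ler_pdivlMr //; move=> h2; rewrite mulrC; exact: ltW.
Qed.

Lemma dual_lin (a b : R) (f g : X -> R) : is_dual f -> is_dual g ->
  is_dual (fun u => a * f u + b * g u)%R.
Proof.
move=> df dg; split; [|split].
- by move=> x y; rewrite (dualD df) (dualD dg); ring.
- by move=> c x; rewrite (dualZ df) (dualZ dg); ring.
- have [_ [_ cf]] := df; have [_ [_ cg]] := dg.
  by apply: cont_add; apply: cont_mul => //; exact: cst_continuous.
Qed.

Lemma add_point (T : set (X * (X -> R))) (HT : maximal_monotone T) x (f : X -> R) :
  is_dual f -> (forall a h, T (a, h) -> (0 <= f (x - a) - h (x - a))%R) -> T (x, f).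
Proof.
move=> df Hf; have [[opT monT] maxT] := HT.
set T' := T `|` [set (x, f)].
have mT' : monotone_op T'.
  split.
  - by move=> z [/opT //|->].
  - move=> x1 f1 y1 g1 [h1|[-> ->]] [h2|[-> ->]].
    + exact: monT h1 h2.
    + have := Hf _ _ h1; have d1 : is_dual f1 := opT _ h1.
      rewrite !(dualB df) !(dualB d1); lra.
    + exact: Hf _ _ h2.
    + by rewrite subrr.
rewrite -(maxT T' mT' (fun z hz => or_introl hz)); by right.
Qed.

Variable (T : set (X * (X -> R))).
Hypothesis HT : maximal_monotone T.

Local Open Scope ereal_scope.
Definition fitzv (q p : X * (X -> R)) : R := (q.2 p.1 + p.2 q.1 - q.2 q.1)%R.
Definition fitz (p : X * (X -> R)) : \bar R := ereal_sup [set (fitzv q p)%:E | q in T].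

Lemma fitz_ge q p : T q -> (fitzv q p)%:E <= fitz p.
Proof. by move=> Tq; apply: ereal_sup_ubound; exists q. Qed.

Lemma fitz_fam : fitzpatrick_family T fitz.
Proof.
have [[opT monT] maxT] := HT.
have Teta (q : X * (X -> R)) : T q -> T (q.1, q.2) by case: q.
split; [|split; [|split]].
- move=> x1 f1 x2 f2 l r1 r2 d1 d2 l0 l1 h1 h2.
  apply: ge_ereal_sup => _ [q Tq <-]; rewrite lee_fin.
  have e1 := le_trans (fitz_ge q (x1, f1) Tq) h1; rewrite lee_fin in e1.
  have e2 := le_trans (fitz_ge q (x2, f2) Tq) h2; rewrite lee_fin in e2.
  move: e1 e2; rewrite /fitzv /= (dualD (opT _ Tq)) !(dualZ (opT _ Tq)) => e1 e2.
  nra.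
- move=> x f df t.
  move=> /ereal_sup_gt [_ [q Tq <-]]; rewrite lte_fin => tq.
  have [B B0 HB] := dual_bounded _ (opT _ Tq).
  set eps := (fitzv q (x, f) - t)%R.
  have eps0 : (0 < eps)%R by rewrite subr_gt0.
  exists (eps / (2 * (B + `|q.1| + 1)))%R.
    by rewrite divr_gt0 // mulr_gt0 //; have := normr_ge0 q.1; lra.
  move=> y g dg hy hg; apply: lt_le_trans (fitz_ge q (y, g) Tq); rewrite lte_fin.
  set d := (eps / (2 * (B + `|q.1| + 1)))%R.
  have d0 : (0 < d)%R by rewrite divr_gt0 // mulr_gt0 //; have := normr_ge0 q.1; lra.
  have h1 : (`|q.2 (y - x)| <= B * d)%R.
    by apply: (le_trans (HB _)); apply: ler_wpM2l; [lra|exact: ltW].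
  have h2 := hg q.1.
  have h3 : (B * d + d * `|q.1| < eps)%R.
    have -> : (B * d + d * `|q.1| = d * (B + `|q.1|))%R by ring.
    have hq := normr_ge0 q.1.
    rewrite /d mulrAC ltr_pdivrMr; last by rewrite mulr_gt0 //; lra.
    nra.
  move: h1 h2; rewrite (dualB (opT _ Tq)) /fitzv /= => h1 h2.
  have := ler_norml (q.2 y - q.2 x) (B * d); rewrite h1 => /esym/andP [h1a h1b].
  have := ler_norml (g q.1 - f q.1) (d * `|q.1|); rewrite h2 => /esym/andP [h2a h2b].
  rewrite /eps /fitzv /= in h3; lra.
- move=> x f df; rewrite leNgt; apply/negP => hlt.
  have Txf : T (x, f).
    apply: add_point => // a h Tah.
    have := le_lt_trans (fitz_ge (a, h) (x, f) Tah) hlt; rewrite lte_fin /fitzv /=.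
    have dh : is_dual h := opT _ Tah.
    rewrite (dualB df) (dualB dh); lra.
  have := le_lt_trans (fitz_ge (x, f) (x, f) Txf) hlt; rewrite lte_fin /fitzv /=; lra.
- move=> x f Txf; apply/eqP; rewrite eq_le; apply/andP; split.
    apply: ge_ereal_sup => _ [q Tq <-]; rewrite lee_fin /fitzv /=.
    have := monT _ _ _ _ Txf (Teta _ Tq).
    have dxf : is_dual f := opT _ Txf.
    rewrite (dualB dxf) (dualB (opT _ Tq)); lra.
  by have := fitz_ge (x, f) (x, f) Txf; rewrite /fitzv /= addrK.
Qed.
End Fitz.

Section Main.
Variables (R : realType) (X : normedModType R) (T : set (X * (X -> R))).
Hypothesis HT : maximal_monotone T.

Let opT : is_operator T := HT.1.1.

Lemma DT M (M0 : 0 <= M) (HM : forall x f, T (x, f) -> forall u, `|f u| <= M * `|u|) x0 :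
  exists f, T (x0, f).
Proof.
have [phi [dphi _ mphi]] := @df_inf _ _ _ HT.1 M M0 HM x0.
by exists phi; apply: (@add_point _ _ T HT).
Qed.

Lemma key_ineq h (Fh : fitzpatrick_family T h) z (g : X -> R) c a (f : X -> R) :
  is_dual g -> (h (z, g) <= c%:E)%E -> T (a, f) -> g a + f z - f a <= c.
Proof.
move=> dg hz Taf; have df : is_dual f := opT _ Taf.
have [hconv [_ [hlow hT]]] := Fh.
rewrite leNgt; apply/negP => hlt.
set E := g a + f z - f a - c.
have E0 : 0 < E by rewrite /E subr_gt0.
set K := g a + f z - f a - g z.
have hK := normr_ge0 K.
set l := E / (2 * (`|K| + E + 1)).
have l0 : 0 < l by rewrite divr_gt0 // mulr_gt0 //; lra.
have l1 : l <= 1.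
  rewrite ler_pdivrMr; last by rewrite mulr_gt0 //; lra.
  lra.
have hA : (h (a, f) <= (f a)%:E)%E by rewrite hT.
have := hconv _ _ _ _ l _ _ dg df (ltW l0) l1 hz hA.
have dF := @dual_lin _ _ l (1 - l) _ _ dg df.
move/(le_trans (hlow (l *: z + (1 - l) *: a) _ dF)); rewrite lee_fin.
rewrite (dualD dg) (dualD df) !(dualZ dg) !(dualZ df) => In.
have id : l * (E - l * K) = (l * (l * g z + (1 - l) * g a) + (1 - l) * (l * f z + (1 - l) * f a))
   - (l * c + (1 - l) * f a) by rewrite /E /K; ring.
have hEK : E - l * K <= 0.
  have : l * (E - l * K) <= 0 by rewrite id; lra.
  by rewrite pmulr_rle0.
have : l * `|K| < E.
  rewrite /l mulrAC ltr_pdivrMr; last by rewrite mulr_gt0 //; lra.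
  nra.
have : l * K <= l * `|K| by apply: ler_wpM2l; [exact: ltW | exact: ler_norm].
lra.
Qed.

Lemma lin_bound (g : X -> R) C M : is_dual g -> (forall u, g u <= C + M * `|u|) ->
  forall u, `|g u| <= M * `|u|.
Proof.
move=> dg H.
have H1 u : g u <= M * `|u|.
  rewrite leNgt; apply/negP => hlt.
  set del := g u - M * `|u|.
  have d0 : 0 < del by rewrite /del subr_gt0.
  have hC := normr_ge0 C.
  set t := (`|C| + 1) / del.
  have t0 : 0 < t by rewrite divr_gt0 //; lra.
  have := H (t *: u); rewrite (dualZ dg) normrZ gtr0_norm // => h1.
  have : t * del = `|C| + 1 by rewrite /t mulfVK // gt_eqF.
  rewrite /del => h2.
  have := ler_norm C; nra.
move=> u; rewrite ler_norml; apply/andP; split; last exact: H1.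
by have := H1 (- u); rewrite (dualN dg) normrN; lra.
Qed.

Lemma P2_bound M (M0 : 0 <= M) (HM : forall x f, T (x, f) -> forall u, `|f u| <= M * `|u|)
  h (Fh : fitzpatrick_family T h) g : P2D h g -> forall u, `|g u| <= M * `|u|.
Proof.
move=> [dg [z hz]].
have [_ [_ [hlow _]]] := Fh.
have fz : h (z, g) \is a fin_num.
  by rewrite fin_numElt hz andbT; apply: lt_le_trans (hlow _ _ dg); rewrite ltNyr.
set c := fine (h (z, g)).
have hzc : (h (z, g) <= c%:E)%E by rewrite /c fineK.
apply: (@lin_bound g (c + M * `|z|) M dg) => u.
have [f Tuf] := @DT M M0 HM u.
have := @key_ineq h Fh z g c u f dg hzc Tuf.
have := HM _ _ Tuf z; have := HM _ _ Tuf u.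
rewrite !ler_norml => /andP [_ a1] /andP [a2 _]; lra.
Qed.

Lemma ereal_le_eps (x : \bar R) (r : R) : (forall e, 0 < e -> (x <= (r + e)%:E)%E) -> (x <= r%:E)%E.
Proof.
case: x => [s| |] H //.
- rewrite lee_fin leNgt; apply/negP => hlt.
  have := H ((s - r) / 2); rewrite lee_fin; lra.
- by have := H 1 ltr01.
- exact: leNye.
Qed.

Lemma lip_key M (M0 : 0 <= M) (HM : forall x f, T (x, f) -> forall u, `|f u| <= M * `|u|)
  h (Fh : fitzpatrick_family T h) (g : X -> R) (dg : is_dual g)
  (gM : forall u, `|g u| <= M * `|u|) y cy :
  (h (y, g) <= cy%:E)%E -> forall x, (h (x, g) <= (cy + M * `|x - y|)%:E)%E.
Proof.
move=> hy x; apply: ereal_le_eps => eps eps0.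
have [hconv [hlsc [hlow hT]]] := Fh.
set t := cy + M * `|x - y| + eps.
rewrite leNgt; apply/negP => hlt.
have [d d0 P] := hlsc x g dg t hlt.
set Q := `|cy| + M * `|y| + 1.
have Q0 : 0 < Q by rewrite /Q; have := normr_ge0 cy; have := normr_ge0 y; nra.
set m := Num.min (Num.min 1 (d / (2 * M + 1))) (eps / Q).
have m0 : 0 < m.
  rewrite /m !lt_min ltr01 /= !divr_gt0 //; lra.
have m1 : m <= 1 by rewrite /m !ge_min lexx.
have m2 : m * (2 * M + 1) <= d.
  rewrite -ler_pdivlMr; last by lra.
  by rewrite /m !ge_min lexx orbT.
have m3 : m * Q <= eps.
  rewrite -ler_pdivlMr //.
  by rewrite /m ge_min lexx orbT.
set lam := m / 2.
have lam0 : 0 < lam by rewrite /lam; lra.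
set a := y + lam^-1 *: (x - y).
have [f Taf] := @DT M M0 HM a.
have df : is_dual f := opT _ Taf.
have hA : (h (a, f) <= (f a)%:E)%E by rewrite hT.
have l0 : 0 <= 1 - lam by rewrite /lam; lra.
have l1 : 1 - lam <= 1 by lra.
have := hconv _ _ _ _ (1 - lam) _ _ dg df l0 l1 hy hA.
have ey : (1 - lam) *: y + (1 - (1 - lam)) *: a = x.
  have -> : 1 - (1 - lam) = lam by ring.
  rewrite /a scalerDr scalerA mulfV ?gt_eqF // scale1r scalerBl scale1r.
  by rewrite addrA subrK addrC subrK.
have dF := @dual_lin _ _ (1 - lam) (1 - (1 - lam)) _ _ dg df.
move=> hc; rewrite ey in hc.
have hx : `|x - x| < d by rewrite subrr normr0.
have hg' : forall u, `|(1 - lam) * g u + (1 - (1 - lam)) * f u - g u| <= d * `|u|.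
  move=> u.
  have -> : (1 - lam) * g u + (1 - (1 - lam)) * f u - g u = lam * (f u - g u) by ring.
  rewrite normrM gtr0_norm //.
  have hfu : `|f u - g u| <= 2 * M * `|u|.
    apply: (le_trans (ler_normB _ _)); have := HM _ _ Taf u; have := gM u; lra.
  have hu := normr_ge0 u.
  have : lam * `|f u - g u| <= lam * (2 * M * `|u|) by apply: ler_wpM2l => //; exact: ltW.
  have : m * (2 * M + 1) * `|u| <= d * `|u| by apply: ler_wpM2r.
  rewrite /lam; nra.
have := P x _ dF hx hg'.
move/lt_le_trans => /(_ _ hc); rewrite lte_fin => ht.
have hla : f (lam *: a) = lam * f y + f (x - y).
  by rewrite /a scalerDr scalerA mulfV ?gt_eqF // scale1r (dualD df (lam *: y)) (dualZ df).
rewrite (dualZ df) in hla.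
have hfy : f y <= M * `|y| by have := HM _ _ Taf y; rewrite ler_norml => /andP [].
have hfxy : f (x - y) <= M * `|x - y| by have := HM _ _ Taf (x - y); rewrite ler_norml => /andP [].
have hcy : - cy <= `|cy| by rewrite -normrN ler_norm.
have e1 : lam * (`|cy| + M * `|y|) <= eps / 2.
  have : `|cy| + M * `|y| <= Q by rewrite /Q; lra.
  have hQ : 0 <= `|cy| + M * `|y| by have := normr_ge0 cy; have := normr_ge0 y; nra.
  rewrite /lam => hQ'; nra.
have e2 : lam * (- cy) <= lam * `|cy| by apply: ler_wpM2l => //; exact: ltW.
have e3 : lam * f y <= lam * (M * `|y|) by apply: ler_wpM2l => //; exact: ltW.
move: ht; rewrite /t => ht.
have : (1 - (1 - lam)) * f a = lam * f a by ring.
nra.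
Qed.
End Main.

Section Final.
Variables (R : realType) (X : normedModType R) (T : set (X * (X -> R))).
Hypothesis HT : maximal_monotone T.

Lemma rb_pos : range_bounded T ->
  exists2 M : R, 0 <= M & forall x f, T (x, f) -> forall u, `|f u| <= M * `|u|.
Proof.
move=> [M HM]; exists (Num.max M 0); first by rewrite le_max lexx orbT.
move=> x f Txf u; apply: (le_trans (HM _ _ Txf u)); apply: ler_wpM2r => //.
by rewrite le_max lexx.
Qed.

Lemma one_four : range_bounded T ->
  (forall h, fitzpatrick_family T h ->
          forall f, P2D h f -> forall x : X, h (x, f) \is a fin_num) /\
  (exists2 L : R, 0 <= L &
          forall h, fitzpatrick_family T h -> forall f, P2D h f ->
          forall x z : X, (`|h (x, f) - h (z, f)| <= (L * `|x - z|)%:E)%E).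
Proof.
move=> /rb_pos [M M0 HM].
have fin h (Fh : fitzpatrick_family T h) f (Pf : P2D h f) x : h (x, f) \is a fin_num.
  have gM := @P2_bound _ _ _ HT M M0 HM h Fh f Pf.
  have [df [z hz]] := Pf.
  have [_ [_ [hlow _]]] := Fh.
  have fz : h (z, f) \is a fin_num.
    by rewrite fin_numElt hz andbT; apply: lt_le_trans (hlow _ _ df); rewrite ltNyr.
  have hzc : (h (z, f) <= (fine (h (z, f)))%:E)%E by rewrite fineK.
  have := @lip_key _ _ _ HT M M0 HM h Fh f df gM z _ hzc x => hx.
  rewrite fin_numElt; apply/andP; split.
    by apply: lt_le_trans (hlow _ _ df); rewrite ltNyr.
  by apply: le_lt_trans hx _; rewrite ltry.
split => //; exists M => // h Fh f Pf x z.
have gM := @P2_bound _ _ _ HT M M0 HM h Fh f Pf.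
have [df _] := Pf.
have fx := fin h Fh f Pf x; have fz := fin h Fh f Pf z.
set cx := fine (h (x, f)); set cz := fine (h (z, f)).
have ex : h (x, f) = cx%:E by rewrite /cx fineK.
have ez : h (z, f) = cz%:E by rewrite /cz fineK.
have h1 := @lip_key _ _ _ HT M M0 HM h Fh f df gM z cz (ltac:(by rewrite ez)) x.
have h2 := @lip_key _ _ _ HT M M0 HM h Fh f df gM x cx (ltac:(by rewrite ex)) z.
rewrite ex lee_fin in h1; rewrite ez lee_fin in h2.
rewrite ex ez -EFinB abse_EFin lee_fin ler_norml.
rewrite distrC in h2; apply/andP; split; lra.
Qed.

Lemma three_one h : fitzpatrick_family T h -> P2D_bounded h -> range_bounded T.
Proof.
move=> [_ [_ [_ hT]]] [M HM]; exists M => x f Txf; apply: HM; split.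
  exact: HT.1.1 _ Txf.
by exists x; rewrite hT // ltry.
Qed.

Lemma five_one h : fitzpatrick_family T h ->
  (forall f, P2D h f -> forall x : X, h (x, f) \is a fin_num) ->
  (exists2 L : R, 0 <= L &
     forall f, P2D h f ->
     forall x z : X, (`|h (x, f) - h (z, f)| <= (L * `|x - z|)%:E)%E) ->
  range_bounded T.
Proof.
move=> [_ [_ [hlow hT]]] hfin [L L0 HL]; exists L => x f Txf.
have df : is_dual f := HT.1.1 _ Txf.
have Pf : P2D h f by split => //; exists x; rewrite hT // ltry.
have H u : f u <= L * `|u|.
  have fz := hfin f Pf (x + u).
  have := HL f Pf (x + u) x; rewrite (hT x f Txf) -(fineK fz) -EFinB abse_EFin lee_fin.
  have := hlow (x + u) f df; rewrite -(fineK fz) lee_fin.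
  rewrite (dualD df) addrAC subrr add0r => h1 h2.
  have := ler_norm (fine (h (x + u, f)) - f x); lra.
move=> u; rewrite ler_norml; apply/andP; split; last exact: H.
by have := H (- u); rewrite (dualN df) normrN; lra.
Qed.
End Final.

Theorem lemma4p4 (R : realType) (X : completeNormedModType R)
  (T : set (X * (X -> R))) (HT : maximal_monotone T) :
  [<-> range_bounded T;
       forall h, fitzpatrick_family T h -> P2D_bounded h;
       exists2 h, fitzpatrick_family T h & P2D_bounded h;
       (forall h, fitzpatrick_family T h ->
          forall f, P2D h f -> forall x : X, h (x, f) \is a fin_num) /\
       (exists2 L : R, 0 <= L &
          forall h, fitzpatrick_family T h -> forall f, P2D h f ->
          forall x z : X, (`|h (x, f) - h (z, f)| <= (L * `|x - z|)%:E)%E);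
       exists2 h, fitzpatrick_family T h &
         (forall f, P2D h f -> forall x : X, h (x, f) \is a fin_num) /\
         (exists2 L : R, 0 <= L &
            forall f, P2D h f ->
            forall x z : X, (`|h (x, f) - h (z, f)| <= (L * `|x - z|)%:E)%E)].
Proof.
have Ffam := @fitz_fam _ _ T HT.
tfae.
- move=> /rb_pos [M M0 HM] h Fh; exists M => f Pf.
  exact: (@P2_bound _ _ _ HT M M0 HM h Fh f Pf).
- by move=> H; exists (@fitz _ _ T) => //; apply: H.
- move=> [h Fh Bh]; exact: (@one_four _ _ T HT (@three_one _ _ T HT h Fh Bh)).
- move=> [H1 [L L0 H2]]; exists (@fitz _ _ T) => //; split.
    exact: H1.
  by exists L => //; apply: H2.
- move=> [h Fh [H1 H2]]; exact: (@five_one _ _ T HT h Fh H1 H2).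
Qed.
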